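(* (Equivalence theorem for bounded approximate designs.) Let $\nu_1,\ldots,\nu_N$ and $\mu_1,\ldots,\mu_N$ be real numbers with $0\le \nu_i<\mu_i$ for all $i$, $\sum_{i=1}^N\nu_i\le 1$ and $\sum_{i=1}^N\mu_i\ge 1$. Let $\Xi$ be the set of all designs $\xi=\{(\boldsymbol{x}_i,w_i): i=1,\ldots,N\}$ with $\nu_i\le w_i\le\mu_i$ for all $i$ and $\sum_{i=1}^N w_i=1$. Let $\Phi\in\Lambda$ and let $\xi^*=\{(\boldsymbol{x}_i,w_i)\}\in\Xi$ with $\Phi(\xi^* )<\infty$. Then the following are equivalent: (I) $\xi^*$ is $\Phi$-optimal in $\Xi$, i.e. $\Phi(\xi^* )=\min_{\xi\in\Xi}\Phi(\xi)$. (II) There is a partition $\mathcal{X}=\mathcal{X}_1\cup\mathcal{X}_2\cup\mathcal{X}_3$ of the point set $\mathcal{X}=\{\boldsymbol{x}_1,\ldots,\boldsymbol{x}_N\}$ such that (a) $w_i=\nu_i$ for $\boldsymbol{x}_i\in\mathcal{X}_1$ and $w_i=\mu_i$ for $\boldsymbol{x}_i\in\mathcal{X}_3$; (b) if $\mathcal{X}_2=\emptyset$, then $\max_{\boldsymbol{x}_i\in\mathcal{X}_3}F_\Phi(\xi^*;\boldsymbol{x}_i)\le\min_{\boldsymbol{x}_i\in\mathcal{X}_1}F_\Phi(\xi^*;\boldsymbol{x}_i)$; (c) if $\mathcal{X}_2\neq\emptyset$, then there is a real number $s$ such that for every $\boldsymbol{x}_i\in\mathcal{X}_2$: (i) $\nu_i<w_i<\mu_i$;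 (ii) $F_\Phi(\xi^*;\boldsymbol{x}_i)=s$; and (iii) $\max_{\boldsymbol{x}_j\in\mathcal{X}_3}F_\Phi(\xi^*;\boldsymbol{x}_j)\le s\le\min_{\boldsymbol{x}_j\in\mathcal{X}_1}F_\Phi(\xi^*;\boldsymbol{x}_j)$. (Here a maximum over the empty set is $-\infty$ and a minimum over the empty set is $+\infty$.)
   Context: Setting: $N$ points $\boldsymbol{x}_1,\ldots,\boldsymbol{x}_N$ (treated as distinct by index) forming the design space $\mathcal{X}$, each with a symmetric positive semidefinite $p_1\times p_1$ information matrix $I_{\boldsymbol\theta}(\boldsymbol{x}_i)$. An (approximate) design is $\xi=\{(\boldsymbol{x}_i,w_i)\}$ with $w_i\ge0$, $\sum_i w_i=1$; its information matrix is $M(\xi)=\sum_i w_i I_{\boldsymbol\theta}(\boldsymbol{x}_i)$, and a criterion $\Phi$ is a function of $M(\xi)$ (taking value $+\infty$ when undefined, e.g. at singular $M$), written $\Phi(\xi)$; designs are added/scaled through their weight vectors. Directional derivative: $F_\Phi(\xi,\eta)=\lim_{\alpha\downarrow0}\frac{\Phi((1-\alpha)\xi+\alpha\eta)-\Phi(\xi)}{\alpha}$, and $F_\Phi(\xi;\boldsymbol{x}_i)=F_\Phi(\xi,\delta_{\boldsymbol{x}_i})$ where $\delta_{\boldsymbol{x}_i}$ is the design putting weight 1 on $\boldsymbol{x}_i$. The class $\Lambda$ consists of criteria $\Phi$ that are convex (as functions of the weight vector) and linearly differentiable, meaning that at every design $\xi$ with $\Phi(\xi)<\infty$ and every design $\eta=\{(\boldsymbol{x}_i,\lambda_i)\}$,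 $F_\Phi(\xi,\eta)$ exists and equals $\sum_i\lambda_iF_\Phi(\xi;\boldsymbol{x}_i)$; moreover for designs $\xi_1,\xi_2,\xi_3$, $\gamma\mapsto\Phi(\xi_1+\gamma(\xi_2-\xi_3))$ is infinitely differentiable on the set of $\gamma>0$ for which this is a design. Examples: $D$-optimality $\Phi=\log\det(M^{-1})$, $A$-optimality $\Phi=\mathrm{Tr}(M^{-1})$. *)

(* Defs.v *)
From HB Require Import structures.
From mathcomp Require Import all_boot all_order all_algebra.
From mathcomp Require Import all_classical all_reals all_analysis.
Set Implicit Arguments. Unset Strict Implicit. Unset Printing Implicit Defensive.
Import Order.TTheory GRing.Theory Num.Theory.
Import numFieldNormedType.Exports.
Local Open Scope ring_scope.
Local Open Scope classical_set_scope.

Section Designs.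
Variables (R : realType) (N p : nat).

Definition psd_sym (A : 'M[R]_p) : Prop :=
  A^T = A /\ forall v : 'cV[R]_p, 0 <= (v^T *m A *m v) ord0 ord0.

(* an approximate design on the points x_1..x_N, given by its weight vector *)
Definition is_design (w : 'I_N -> R) : Prop :=
  (forall i, 0 <= w i) /\ \sum_i w i = 1.

Definition delta (i : 'I_N) : 'I_N -> R := fun j => if j == i then 1 else 0.

Definition comb (a : R) (w v : 'I_N -> R) : 'I_N -> R :=
  fun i => (1 - a) * w i + a * v i.

Definition infomat (info : 'I_N -> 'M[R]_p) (w : 'I_N -> R) : 'M[R]_p :=
  \sum_i w i *: info i.

Definition phiW (info : 'I_N -> 'M[R]_p) (Phi : 'M[R]_p -> \bar R)
  (w : 'I_N -> R) : \bar R := Phi (infomat info w).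

Definition diffq info Phi (w v : 'I_N -> R) (a : R) : \bar R :=
  ((phiW info Phi (comb a w v) - phiW info Phi w) * (a^-1)%:E)%E.

Definition is_dir_deriv info Phi (w v : 'I_N -> R) (l : R) : Prop :=
  diffq info Phi w v @ at_right 0 --> l%:E.

Definition FPhi info Phi (w : 'I_N -> R) (i : 'I_N) : R :=
  fine (lim (diffq info Phi w (delta i) @ at_right 0)).

Definition in_Lambda (info : 'I_N -> 'M[R]_p) (Phi : 'M[R]_p -> \bar R) : Prop :=
  (forall w, is_design w -> phiW info Phi w != -oo%E) /\
  (forall w v a, is_design w -> is_design v -> 0 <= a <= 1 ->
     (phiW info Phi (comb a w v)
        <= (1 - a)%:E * phiW info Phi w + a%:E * phiW info Phi v)%E) /\
  (forall w v, is_design w -> (phiW info Phi w < +oo)%E -> is_design v ->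
     is_dir_deriv info Phi w v (\sum_i v i * FPhi info Phi w i)) /\
  (forall w1 w2 w3, is_design w1 -> is_design w2 -> is_design w3 ->
     let g := fun gam : R => phiW info Phi (fun i => w1 i + gam * (w2 i - w3 i)) in
     forall gam0 : R,
       (\forall gam \near gam0,
          0 < gam /\ is_design (fun i => w1 i + gam * (w2 i - w3 i))
          /\ (g gam < +oo)%E) ->
       forall n : nat, derivable (derive1n n (fun gam => fine (g gam))) gam0 1).

Definition in_Xi (nu mu : 'I_N -> R) (w : 'I_N -> R) : Prop :=
  is_design w /\ forall i, nu i <= w i <= mu i.

End Designs.

(* Main.v *)
Require Import Defs.
From HB Require Import structures.
From mathcomp Require Import all_boot all_order all_algebra.
From mathcomp Require Import all_classical all_reals all_analysis.
From mathcomp Require Import ring lra.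
Import Order.TTheory GRing.Theory Num.Theory.
Local Open Scope ring_scope.
Section Helpers.
Set Implicit Arguments. Unset Strict Implicit.
Local Open Scope classical_set_scope.


Lemma lim_ge_aux (R : realType) (f : R -> \bar R) (l x : R) :
  f @ 0^'+ --> l%:E -> (forall a, 0 < a <= 1 -> (x%:E <= f a)%E) -> x <= l.
Proof.
move=> hf hx; rewrite -lee_fin; apply: (cvge_to_ge hf).
near=> a; apply: hx; apply/andP; split.
  by near: a; exact: nbhs_right_gt.
by apply/ltW; near: a; exact: nbhs_right_lt.
Unshelve. all: by end_near. Qed.

Lemma lim_le_aux (R : realType) (f : R -> \bar R) (l x : R) :
  f @ 0^'+ --> l%:E -> (forall a, 0 < a <= 1 -> (f a <= x%:E)%E) -> l <= x.
Proof.
move=> hf hx; rewrite -lee_fin; apply: (cvge_to_le hf).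
near=> a; apply: hx; apply/andP; split.
  by near: a; exact: nbhs_right_gt.
by apply/ltW; near: a; exact: nbhs_right_lt.
Unshelve. all: by end_near. Qed.

Lemma lp_s (R : realType) N (d F : 'I_N -> R) s : \sum_i d i = 0 ->
  (forall i, 0 <= d i * (F i - s)) -> 0 <= \sum_i d i * F i.
Proof.
move=> hd hi.
have -> : \sum_i d i * F i = \sum_i d i * (F i - s) + s * \sum_i d i.
  rewrite mulr_sumr -big_split /=; apply: eq_bigr => i _.
  by rewrite mulrBr [s * _]mulrC subrK.
by rewrite hd mulr0 addr0 sumr_ge0.
Qed.

Lemma comb_Xi (R : realType) N (nu mu w v : 'I_N -> R) a :
  in_Xi nu mu w -> in_Xi nu mu v -> 0 <= a <= 1 -> in_Xi nu mu (comb a w v).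
Proof.
move=> [[w0 w1] wb] [[v0 v1] vb] /andP[a0 a1].
have a1' : 0 <= 1 - a by rewrite subr_ge0.
split; first split.
- by move=> i; rewrite /comb addr_ge0 // mulr_ge0.
- rewrite /comb big_split /= -!mulr_sumr w1 v1 !mulr1 subrK //.
move=> i; rewrite /comb; have /andP[l1 u1] := wb i; have /andP[l2 u2] := vb i.
have e x : x = (1 - a) * x + a * x by rewrite mulrBl mul1r subrK.
apply/andP; split.
  by rewrite [nu i]e lerD // ler_wpM2l.
by rewrite [mu i]e lerD // ler_wpM2l.
Qed.

Lemma shift_aux (R : realType) N (nu mu w F : 'I_N -> R) :
  in_Xi nu mu w -> (forall i, 0 <= nu i) ->
  (forall v, in_Xi nu mu v -> 0 <= \sum_k (v k - w k) * F k) ->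
  forall i j, i != j -> nu i < w i -> w j < mu j -> F i <= F j.
Proof.
move=> [[w0 w1] wb] hnu0 K i j ij hi hj.
pose e := Num.min (w i - nu i) (mu j - w j).
have e0 : 0 < e by rewrite /e lt_min !subr_gt0 hi hj.
have ei : e <= w i - nu i by rewrite /e ge_min lexx.
have ej : e <= mu j - w j by rewrite /e ge_min lexx orbT.
pose v := fun k => w k + (if k == j then e else 0) - (if k == i then e else 0).
have hsum (c : R) (l : 'I_N) : \sum_k (if k == l then c else 0) = c.
  by rewrite -big_mkcond big_pred1_eq.
have hv : in_Xi nu mu v.
  split; first split.
  - move=> k; rewrite /v.
    case: eqP => [->|_]; case: eqP => [->|_].
    + by rewrite addrK.
    + by rewrite subr0 addr_ge0 // ltW.
    + rewrite addr0 subr_ge0; apply: (le_trans ei).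
      by rewrite lerBlDr lerDl hnu0.
    + by rewrite addr0 subr0.
  - rewrite /v sumrB big_split /= w1 !hsum; by rewrite addrK.
  move=> k; rewrite /v; have /andP[l1 u1] := wb k.
  case: (eqVneq k j) => kj; case: (eqVneq k i) => ki.
  - by move: ij; rewrite -kj -ki eqxx.
  - rewrite kj in l1 u1 ki *; apply/andP; split; lra.
  - rewrite ki in l1 u1 kj *; apply/andP; split; lra.
  - by rewrite addr0 subr0 l1 u1.
have := K v hv.
have -> : \sum_k (v k - w k) * F k = e * F j - e * F i.
  rewrite -(hsum (e * F j) j) -(hsum (e * F i) i) -sumrB.
  apply: eq_bigr => k _; rewrite /v.
  by case: eqP => [->|_]; case: eqP => [->|_]; rewrite ?addrK; ring.
by rewrite subr_ge0 (ler_pM2l e0).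
Qed.

Lemma part_lp (R : realType) N (nu mu w v F : 'I_N -> R) (X1 X2 X3 : {set 'I_N}) (s : R) :
 in_Xi nu mu w -> in_Xi nu mu v -> X1 :|: X2 :|: X3 = [set: 'I_N]%SET ->
 (forall i, i \in X1 -> w i = nu i) -> (forall i, i \in X3 -> w i = mu i) ->
 (forall i, i \in X1 -> s <= F i) -> (forall i, i \in X2 -> F i = s) ->
 (forall i, i \in X3 -> F i <= s) ->
 0 <= \sum_k (v k - w k) * F k.
Proof.
move=> [[w0 w1] wb] [[v0 v1] vb] hcov h1 h3 s1 s2 s3.
apply: (@lp_s _ _ _ _ s); first by rewrite sumrB v1 w1 subrr.
move=> i; have : i \in [set: 'I_N]%SET by rewrite inE.
rewrite -hcov !finset.in_setU => /orP[/orP[hi|hi]|hi].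
- apply: mulr_ge0; last by rewrite subr_ge0 s1.
  by rewrite subr_ge0 h1 //; case/andP: (vb i).
- by rewrite s2 // subrr mulr0.
- apply: mulr_le0; last by rewrite subr_le0 s3.
  by rewrite subr_le0 h3 //; case/andP: (vb i).
Qed.

End Helpers.

Theorem theorem2 (R : realType) (N p : nat)
  (info : 'I_N -> 'M[R]_p) (hinfo : forall i, psd_sym (info i))
  (nu mu : 'I_N -> R)
  (hnu0 : forall i, 0 <= nu i) (hnumu : forall i, nu i < mu i)
  (hsnu : \sum_i nu i <= 1) (hsmu : 1 <= \sum_i mu i)
  (Phi : 'M[R]_p -> \bar R) (hPhi : in_Lambda info Phi)
  (w : 'I_N -> R) (hw : in_Xi nu mu w) (hfin : (phiW info Phi w < +oo)%E) :
  (forall v, in_Xi nu mu v -> (phiW info Phi w <= phiW info Phi v)%E)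
  <->
  (exists X1 X2 X3 : {set 'I_N},
     [/\ (X1 :|: X2 :|: X3 = [set: 'I_N] /\
          [/\ [disjoint X1 & X2], [disjoint X1 & X3] & [disjoint X2 & X3]]),
         (forall i, i \in X1 -> w i = nu i) /\ (forall i, i \in X3 -> w i = mu i),
         (X2 = finset.set0 -> forall i j, i \in X3 -> j \in X1 ->
            FPhi info Phi w i <= FPhi info Phi w j) &
         (X2 != finset.set0 -> exists s : R, forall i, i \in X2 ->
            [/\ nu i < w i < mu i,
                FPhi info Phi w i = s,
                (forall j, j \in X3 -> FPhi info Phi w j <= s) &
                (forall j, j \in X1 -> s <= FPhi info Phi w j)])]).
Proof.
have [hnm [hconv [hdd _]]] := hPhi.
have dw : is_design w := hw.1.
have [c hc] : exists c, phiW info Phi w = c%:E.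
  by move: (hnm w dw) hfin; case: (phiW info Phi w) => // r _ _; exists r.
pose F := FPhi info Phi w.
have hF0 : \sum_i w i * F i = 0.
  have hd := hdd w w dw hfin dw.
  have hcst : forall a, diffq info Phi w w a = 0%E.
    move=> a; rewrite /diffq.
    have -> : comb a w w = w by apply/funext => i; rewrite /comb mulrBl mul1r subrK.
    by rewrite hc subee ?mul0e.
  apply/eqP; rewrite eq_le; apply/andP; split.
  - by apply: (lim_le_aux hd) => a _; rewrite hcst.
  - by apply: (lim_ge_aux hd) => a _; rewrite hcst.
have hdiff : forall v, \sum_k (v k - w k) * F k = \sum_k v k * F k.
  move=> v; rewrite (eq_bigr (fun k => v k * F k - w k * F k)).
    by rewrite sumrB hF0 subr0.
  by move=> k _; rewrite mulrBl.
split.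
- move=> Hopt.
  have K : forall v, in_Xi nu mu v -> 0 <= \sum_k (v k - w k) * F k.
    move=> v hv; rewrite hdiff.
    apply: (lim_ge_aux (hdd w v dw hfin hv.1)) => a /andP[a0 a1].
    rewrite /diffq hc; apply: mule_ge0; last by rewrite lee_fin invr_ge0 ltW.
    rewrite sube_ge0 ?orbT // -hc; apply: Hopt; apply: comb_Xi => //.
    by rewrite ltW.
  have sh := shift_aux hw hnu0 K.
  have hb i : nu i <= w i <= mu i := hw.2 i.
  exists [set i | w i == nu i], [set i | (nu i < w i) && (w i < mu i)],
         [set i | w i == mu i].
  split.
  + split.
    * apply/setP => i; rewrite !inE; have/andP[l u] := hb i.
      case: (eqVneq (w i) (nu i)) => //= h1.
      case: (eqVneq (w i) (mu i)) => h2; first by rewrite orbT.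
      by rewrite orbF !lt_def h1 l eq_sym h2 u.
    * split; apply/pred0P => i /=; rewrite !inE; apply/negbTE/negP => /andP[].
      - by move=> /eqP-> /andP[]; rewrite ltxx.
      - by move=> /eqP-> /eqP h; have := hnumu i; rewrite h ltxx.
      - by move=> /andP[_ h] /eqP e; move: h; rewrite e ltxx.
  + by split => i; rewrite inE => /eqP.
  + move=> _ i j; rewrite !inE => /eqP hi /eqP hj; apply: sh.
    * by apply/eqP => ij; have := hnumu i; rewrite -hi ij hj ltxx.
    * by rewrite hi hnumu.
    * by rewrite hj hnumu.
  + move=> /set0Pn[k]; rewrite inE => /andP[k1 k2]; exists (F k) => i.
    rewrite inE => /andP[i1 i2]; split.
    * by rewrite i1 i2.
    * case: (eqVneq i k) => [->//|ik]; apply/eqP; rewrite eq_le !sh //.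
      by rewrite eq_sym.
    * move=> j; rewrite inE => /eqP hj; apply: (sh j k) => //; last by rewrite hj hnumu.
      by apply/eqP => jk; move: k2; rewrite -jk hj ltxx.
    * move=> j; rewrite inE => /eqP hj; apply: (sh k j) => //; last by rewrite hj hnumu.
      by apply/eqP => kj; move: k1; rewrite kj hj ltxx.
- case=> [X1 [X2 [X3 [[hcov _] [ha1 ha3] hb hcc]]]] v hv.
  have K : 0 <= \sum_k (v k - w k) * F k.
    have [X2e|X2n] := eqVneq X2 finset.set0.
    * pose M := \big[Order.max/0]_(i in X3) F i.
      pose s := \big[Order.min/M]_(j in X1) F j.
      apply: (@part_lp _ _ nu mu w v F X1 X2 X3 s hw hv hcov ha1 ha3).
      - by move=> j hj; apply: bigmin_le_cond.
      - by move=> i; rewrite X2e inE.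
      - move=> i hi; apply: le_bigmin; first exact: le_bigmax_cond.
        by move=> j hj; apply: hb.
    * have [s hs] := hcc X2n; have /set0Pn[k hk] := X2n.
      apply: (@part_lp _ _ nu mu w v F X1 X2 X3 s hw hv hcov ha1 ha3).
      - by move=> j hj; have [_ _ _ h] := hs k hk; apply: h.
      - by move=> i hi; have [_ h _ _] := hs i hi.
      - by move=> j hj; have [_ _ h _] := hs k hk; apply: h.
  rewrite hdiff in K.
  have dv := hv.1.
  case hpv: (phiW info Phi v) => [d| |]; last 2 first.
    - by rewrite leey.
    - by move: (hnm v dv); rewrite hpv.
  rewrite hc lee_fin.
  suff h : \sum_k v k * F k <= d - c by rewrite -subr_ge0; exact: le_trans K h.
  apply: (lim_le_aux (hdd w v dw hfin dv)) => a /andP[a0 a1].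
  have ha : 0 <= a <= 1 by rewrite ltW.
  have hcx := hconv w v a dw dv ha.
  rewrite hc hpv in hcx.
  have [dcomb _] := comb_Xi hw hv ha.
  move: (hnm _ dcomb) hcx; rewrite /diffq hc.
  case: (phiW info Phi (comb a w v)) => [e| |] // _.
  - rewrite -!EFinM -EFinD lee_fin => he.
    rewrite lee_fin ler_pdivrMr //.
    have -> : (d - c) * a = (1 - a) * c + a * d - c by ring.
    by rewrite lerD2r.
Qed.
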